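(* Let $\langle S,L,\tau,\ell\rangle$ be a labelled Markov chain. Robust bisimilarity $\simeq$ is a robust bisimulation.
   Context: Labelled Markov chain $\langle S,L,\tau,\ell\rangle$: finite $S$, finite $L$, $\tau:S\to\mathcal{D}(S)$, $\ell:S\to L$, $|\ell(S)|\ge 2$. $\Omega(\mu,\nu)$ = couplings (distributions on $S\times S$ with marginals $\mu,\nu$). A (probabilistic) bisimulation is an equivalence relation $R\subseteq S\times S$ such that for all $(s,t)\in R$, $\ell(s)=\ell(t)$ and some $\omega\in\Omega(\tau(s),\tau(t))$ has $\mathrm{support}(\omega)\subseteq R$. $S^2_\Delta=\{(s,s)\}$, $S^2_1=\{(s,t)\mid\ell(s)\ne\ell(t)\}$. A policy is $P:S\times S\to\mathcal{D}(S\times S)$ with $P(s,t)\in\Omega(\tau(s),\tau(t))$ for $(s,t)\notin S^2_1$ and $P(s,t)$ the point mass at $(s,t)$ for $(s,t)\in S^2_1$; $\mathcal{P}$ is the set of policies; $P$ induces the Markov chain $\langle S\times S,P\rangle$. Robust bisimilarity: $s\simeq t$ iff some $P\in\mathcal{P}$ makes $(s,t)$ reach $S^2_\Delta$ with probability $1$ in $\langle S\times S,P\rangle$. For a policy $P$, a set $R\subseteq S\times S$ supports a path $(u_1,v_1)\dots(u_n,v_n)$ of $\langle S\times S,P\rangle$ if $(u_i,v_i)\in R$ and $\mathrm{support}(P(u_i,v_i))\subseteq R$ for all $1\le i\le n$. A robust bisimulation is a bisimulation $R$ such that for every $(s,t)\in R$ there is $P\in\mathcal{P}$ such that $R$ supports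 a path from $(s,t)$ to (a pair in) $S^2_\Delta$ in $\langle S\times S,P\rangle$. *)

(* Defs.v *)
From HB Require Import structures.
From mathcomp Require Import all_boot all_order all_algebra.
From mathcomp Require Import reals.
Set Implicit Arguments. Unset Strict Implicit. Unset Printing Implicit Defensive.
Import Order.TTheory GRing.Theory Num.Theory.
Local Open Scope ring_scope.

Definition is_distr (R : realType) (T : finType) (mu : T -> R) : Prop :=
  (forall x, 0 <= mu x) /\ \sum_(x : T) mu x = 1.

Definition coupling (R : realType) (S : finType) (mu nu : S -> R)
  (omega : S * S -> R) : Prop :=
  is_distr omega /\
  (forall s, \sum_(t : S) omega (s, t) = mu s) /\
  (forall t, \sum_(s : S) omega (s, t) = nu t).

Definition dirac (R : realType) (T : finType) (x : T) : T -> R :=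
  fun y => if y == x then 1 else 0.

Definition policy (R : realType) (S : finType) (L : eqType)
  (tau : S -> S -> R) (ell : S -> L) (P : S * S -> S * S -> R) : Prop :=
  forall s t,
    (ell s <> ell t -> P (s, t) = @dirac R _ (s, t)) /\
    (ell s = ell t -> coupling (tau s) (tau t) (P (s, t))).

Definition diagS (S : finType) (u : S * S) : bool := u.1 == u.2.

Fixpoint reach_within (R : realType) (S : finType) (P : S * S -> S * S -> R)
  (n : nat) (u : S * S) : R :=
  if diagS u then 1 else
  match n with
  | 0 => 0
  | n'.+1 => \sum_(v : S * S) P u v * reach_within P n' v
  end.

(* u reaches S^2_Delta with probability 1: the probability of eventually
   reaching (the supremum of the nondecreasing, <= 1, sequence of
   probabilities of reaching within n steps) equals 1. *)
Definition reaches_diag_as (R : realType) (S : finType)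
  (P : S * S -> S * S -> R) (u : S * S) : Prop :=
  forall e : R, 0 < e -> exists n, 1 - e < reach_within P n u.

Definition robust_bisimilar (R : realType) (S : finType) (L : eqType)
  (tau : S -> S -> R) (ell : S -> L) (s t : S) : Prop :=
  exists P, policy tau ell P /\ reaches_diag_as P (s, t).

Definition equivalence_rel (S : Type) (Rel : S -> S -> Prop) : Prop :=
  (forall s, Rel s s) /\ (forall s t, Rel s t -> Rel t s) /\
  (forall s t u, Rel s t -> Rel t u -> Rel s u).

Definition bisimulation (R : realType) (S : finType) (L : eqType)
  (tau : S -> S -> R) (ell : S -> L) (Rel : S -> S -> Prop) : Prop :=
  equivalence_rel Rel /\
  forall s t, Rel s t ->
    ell s = ell t /\
    exists omega, coupling (tau s) (tau t) omega /\
      (forall u v, 0 < omega (u, v) -> Rel u v).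

Definition supports_path (R : realType) (S : finType)
  (P : S * S -> S * S -> R) (Rel : S -> S -> Prop)
  (n : nat) (p : nat -> S * S) : Prop :=
  (forall i, (i < n)%N -> 0 < P (p i) (p i.+1)) /\
  (forall i, (i <= n)%N ->
     Rel (p i).1 (p i).2 /\ (forall v, 0 < P (p i) v -> Rel v.1 v.2)).

Definition robust_bisimulation (R : realType) (S : finType) (L : eqType)
  (tau : S -> S -> R) (ell : S -> L) (Rel : S -> S -> Prop) : Prop :=
  bisimulation tau ell Rel /\
  forall s t, Rel s t ->
    exists P, policy tau ell P /\
      exists (n : nat) (p : nat -> S * S),
        p 0%N = (s, t) /\ diagS (p n) /\ supports_path P Rel n p.

(* Main.v *)
Require Import Defs.
From mathcomp Require Import all_boot all_order all_algebra.
From mathcomp Require Import reals lra.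
From Stdlib Require Import Classical ClassicalEpsilon FunctionalExtensionality.
Import Order.TTheory GRing.Theory Num.Theory.
Local Open Scope ring_scope.
Set Implicit Arguments. Unset Strict Implicit.

Section Main.
Variables (R : realType) (S : finType) (L : finType) (tau : S -> S -> R) (ell : S -> L).
Hypothesis tau_distr : forall s, is_distr (tau s).

Notation S2 := (S * S)%type.

Fixpoint G (P : S2 -> S2 -> R) (n : nat) (f : S2 -> R) (u : S2) : R :=
  if diagS u then 0 else
  match n with 0 => f u | n'.+1 => \sum_v P u v * G P n' f v end.

Definition one : S2 -> R := fun _ => 1.

Lemma dirac_sum (x : S2) : \sum_v @dirac R _ x v = 1.
Proof.
rewrite (bigD1 x) //= /dirac eqxx big1 ?addr0 // => v /negbTE -> //.
Qed.

Lemma dirac_ge0 (x v : S2) : 0 <= @dirac R _ x v.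
Proof. by rewrite /dirac; case: ifP. Qed.

Lemma pol_ge0 P : policy tau ell P -> forall u v, 0 <= P u v.
Proof.
move=> hP [s t] v; have [h1 h2] := hP s t.
case: (eqVneq (ell s) (ell t)) => e.
  by have [[h _] _] := h2 e.
by rewrite h1; [apply: dirac_ge0 | apply/eqP].
Qed.

Lemma pol_sum1 P : policy tau ell P -> forall u, \sum_v P u v = 1.
Proof.
move=> hP [s t]; have [h1 h2] := hP s t.
case: (eqVneq (ell s) (ell t)) => e.
  by have [[_ h] _] := h2 e.
by rewrite h1; [apply: dirac_sum | apply/eqP].
Qed.

Lemma pol_le1 P : policy tau ell P -> forall u v, P u v <= 1.
Proof.
move=> hP u v; rewrite -(pol_sum1 hP u) (bigD1 v) //= lerDl.
by apply: sumr_ge0 => w _; apply: pol_ge0.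
Qed.

Lemma G_add P m n f u : G P (m + n) f u = G P m (G P n f) u.
Proof.
elim: m u => [|m IH] u.
  rewrite add0n /=; case: ifP => // hd.
  by case: n => [|n] /=; rewrite hd.
rewrite addSn /=; case: ifP => // _.
by apply: eq_bigr => v _; rewrite IH.
Qed.

Lemma G_ge0 P : policy tau ell P -> forall n f, (forall v, 0 <= f v) -> forall u, 0 <= G P n f u.
Proof.
move=> hP; elim=> [|n IH] f hf u /=; case: ifP => // _.
by apply: sumr_ge0 => v _; apply: mulr_ge0; [apply: pol_ge0 | apply: IH].
Qed.

Lemma G_le1 P : policy tau ell P -> forall n u, G P n one u <= 1.
Proof.
move=> hP; elim=> [|n IH] u /=; case: ifP => // _.
rewrite -(pol_sum1 hP u); apply: ler_sum => v _.
by rewrite -{2}(mulr1 (P u v)); apply: ler_wpM2l; [apply: pol_ge0 | apply: IH].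
Qed.

Lemma one_ge0 v : 0 <= one v. Proof. by rewrite /one. Qed.

Lemma G_bound P : policy tau ell P -> forall (C : S2 -> Prop),
  (forall u v, C u -> ~~ diagS u -> 0 < P u v -> C v) ->
  forall n f c, (forall v, C v -> 0 <= f v <= c) ->
  forall u, C u -> G P n f u <= c * G P n one u.
Proof.
move=> hP C hC; elim=> [|n IH] f c hf u Cu /=; case: ifP => hd; rewrite ?mulr0 //.
  by rewrite /one mulr1; have /andP[] := hf u Cu.
rewrite mulr_sumr; apply: ler_sum => v _.
have := pol_ge0 hP u v; rewrite le_eqVlt => /orP[/eqP <-|hp].
  by rewrite !mul0r mulr0.
rewrite mulrCA; apply: ler_wpM2l; first exact: ltW.
apply: IH => //; apply: hC Cu _ hp; by rewrite hd.
Qed.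

Lemma G_reach P : policy tau ell P -> forall n u, G P n one u = 1 - reach_within P n u.
Proof.
move=> hP; elim=> [|n IH] u /=; case: ifP => _; rewrite ?subrr ?subr0 //.
rewrite -(pol_sum1 hP u) -sumrB; apply: eq_bigr => v _.
by rewrite IH mulrBr mulr1.
Qed.

Lemma reachesE P : policy tau ell P -> forall u,
  reaches_diag_as P u <-> forall e, 0 < e -> exists n, G P n one u < e.
Proof.
move=> hP u; split=> h e he; have [n hn] := h e he; exists n;
  rewrite ?G_reach // in hn *; lra.
Qed.

Lemma posr_step P : policy tau ell P -> forall n u, ~~ diagS u ->
  (G P n.+1 one u < 1 <-> exists v, 0 < P u v /\ G P n one v < 1).
Proof.
move=> hP n u hd; rewrite /= (negbTE hd); split.
  move=> h; apply: NNPP => hn.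
  have: \sum_v P u v * 1 <= \sum_v P u v * G P n one v.
    apply: ler_sum => v _.
    have := pol_ge0 hP u v; rewrite le_eqVlt => /orP[/eqP <-|hp].
      by rewrite !mul0r.
    apply: ler_wpM2l; first exact: ltW.
    rewrite leNgt; apply/negP => hlt; apply: hn; by exists v.
  under eq_bigr do rewrite mulr1.
  rewrite pol_sum1 //; lra.
move=> [v [hp hv]].
have: 0 < \sum_w P u w * (1 - G P n one w).
  rewrite (bigD1 v) //=; apply: ltr_pwDl.
    by apply: mulr_gt0 => //; lra.
  apply: sumr_ge0 => w _; apply: mulr_ge0; first exact: pol_ge0.
  by have := G_le1 hP n w; lra.
have -> : \sum_w P u w * (1 - G P n one w) = \sum_w P u w - \sum_w P u w * G P n one w.
  by rewrite -sumrB; apply: eq_bigr => w _; rewrite mulrBr mulr1.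
rewrite pol_sum1 //; lra.
Qed.

Lemma transfer P P' : policy tau ell P -> policy tau ell P' ->
  forall (A : S2 -> Prop),
  (forall v w, A v -> ~~ diagS v -> 0 < P v w -> A w /\ 0 < P' v w) ->
  forall n v, A v -> G P n one v < 1 -> G P' n one v < 1.
Proof.
move=> hP hP' A hA; elim=> [|n IH] v Av.
  by rewrite /=; case: ifP.
case hd: (diagS v); first by rewrite /= hd ltr01.
rewrite !posr_step ?hd // => -[w [hw hG]].
have [Aw hw'] := hA v w Av (negbT hd) hw.
exists w; split => //; exact: IH.
Qed.

Lemma propagate P : policy tau ell P -> forall u v,
  reaches_diag_as P u -> ~~ diagS u -> 0 < P u v -> reaches_diag_as P v.
Proof.
move=> hP u v /(reachesE hP) hu hd hp; apply/(reachesE hP) => e he.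
apply: NNPP => hn.
have hge : forall n, e <= G P n one v.
  move=> n; rewrite leNgt; apply/negP => hlt; apply: hn; by exists n.
have e1 : e <= 1 by have := G_le1 hP 0 v; have := hge 0%N; lra.
have hb : forall n, e * P u v <= G P n one u.
  case=> [|n] /=; rewrite (negbTE hd).
    rewrite /one; have := pol_le1 hP u v; nra.
  rewrite (bigD1 v) //= -[e * P u v]addr0; apply: lerD.
    by rewrite mulrC; apply: ler_wpM2l; [apply: pol_ge0 | apply: hge].
  apply: sumr_ge0 => w _; apply: mulr_ge0; first exact: pol_ge0.
  exact: (G_ge0 hP _ one_ge0).
have [m hm] := hu (e * P u v) (mulr_gt0 he hp).
by have := hb m; lra.
Qed.

Lemma labels_diff_G P : policy tau ell P -> forall s t, ell s <> ell t ->
  forall n, G P n one (s, t) = 1.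
Proof.
move=> hP s t hl.
have hd : diagS (s, t) = false.
  by apply/negbTE; apply/negP => /eqP /= e; apply: hl; rewrite e.
elim=> [|n IH] /=; rewrite hd // (proj1 (hP s t) hl).
rewrite (bigD1 (s, t)) //= /dirac eqxx mul1r IH big1 ?addr0 // => v /negbTE ->.
by rewrite mul0r.
Qed.

Lemma reaches_labels P : policy tau ell P -> forall s t,
  reaches_diag_as P (s, t) -> ell s = ell t.
Proof.
move=> hP s t /(reachesE hP) h.
case: (eqVneq (ell s) (ell t)) => // /eqP hl.
have [n hn] := h 1 ltr01.
by rewrite labels_diff_G // ltxx in hn.
Qed.


Definition asb (Q : Prop) : bool := if excluded_middle_informative Q then true else false.

Lemma asbT (Q : Prop) : Q -> asb Q.
Proof. by rewrite /asb; case: excluded_middle_informative. Qed.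

Lemma asbE (Q : Prop) : asb Q -> Q.
Proof. by rewrite /asb; case: excluded_middle_informative. Qed.

Lemma AS P : policy tau ell P -> forall (C : S2 -> Prop),
  (forall u v, C u -> ~~ diagS u -> 0 < P u v -> C v) ->
  (forall u, C u -> exists n, G P n one u < 1) ->
  forall u, C u -> reaches_diag_as P u.
Proof.
move=> hP C hC hpos.
have hex : forall u, exists n, C u -> G P n one u < 1.
  move=> u; case: (classic (C u)) => h.
    by have [n hn] := hpos u h; exists n.
  by exists 0%N.
pose nu u := proj1_sig (constructive_indefinite_description _ (hex u)).
have hnu : forall u, C u -> G P (nu u) one u < 1.
  move=> u; exact: (proj2_sig (constructive_indefinite_description _ (hex u))).
pose N := (\sum_u nu u)%N.
have hG01 : forall n v, 0 <= G P n one v <= 1.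
  by move=> n v; rewrite G_le1 // andbT; apply: G_ge0 => //; apply: one_ge0.
have hN : forall u, C u -> G P N one u < 1.
  move=> u Cu; have : (nu u <= N)%N by rewrite /N (bigD1 u) //= leq_addr.
  move/subnKC => <-; rewrite G_add; apply: le_lt_trans (hnu u Cu).
  rewrite -[X in _ <= X]mul1r; apply: (G_bound hP hC) => //.
pose d u := if asb (C u) then 1 - G P N one u else 1.
pose delta := \prod_u d u.
have d01 : forall u, 0 <= d u <= 1.
  move=> u; rewrite /d; case: ifP => _; last by rewrite ler01 lexx.
  by have := hG01 N u; case/andP => h1 h2; apply/andP; split; lra.
have dpos : 0 < delta.
  apply: prodr_gt0 => u _; rewrite /d; case: ifP => h; last exact: ltr01.
  by have := hN u (asbE h); lra.
have dle : forall u, C u -> delta <= 1 - G P N one u.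
  move=> u Cu; rewrite /delta (bigD1 u) //= {1}/d asbT //.
  rewrite -[X in _ <= X]mulr1; apply: ler_wpM2l.
    by have := d01 u; rewrite /d asbT //; case/andP.
  by apply: prodr_ile1 => v _; apply: d01.
have geo : forall k u, C u -> G P (k * N) one u <= (1 - delta) ^+ k.
  elim=> [|k IH] u Cu; first by rewrite mul0n expr0; apply: G_le1.
  rewrite mulSn G_add.
  have hb : forall v, C v -> 0 <= G P (k * N) one v <= (1 - delta) ^+ k.
    move=> v Cv; rewrite IH // andbT; apply: G_ge0 => //; apply: one_ge0.
  apply: le_trans (G_bound hP hC N hb Cu) _.
  rewrite exprSr; apply: ler_wpM2l.
    apply: exprn_ge0; have := dle u Cu; have := hG01 N u; case/andP => *; lra.
  have := dle u Cu; lra.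
have d1 : delta <= 1 by apply: prodr_ile1 => v _; apply: d01.
have bern : forall k, (1 - delta) ^+ k * (1 + k%:R * delta) <= 1.
  elim=> [|k IH]; first by rewrite expr0 mul0r addr0 mul1r.
  rewrite exprS -mulrA mulrCA; apply: le_trans IH; apply: ler_wpM2l.
    apply: exprn_ge0; lra.
  rewrite -addn1 natrD; set K := k%:R.
  have : 0 <= K by rewrite /K ler0n.
  nra.
move=> u Cu; apply/(reachesE hP) => e he.
pose x := (e * delta)^-1.
have x0 : 0 <= x by rewrite /x invr_ge0; apply: ltW; apply: mulr_gt0.
have hk := archi_boundP x0.
set k := Num.Def.archi_bound x in hk.
exists (k * N)%N.
have hx : x * (e * delta) = 1 by rewrite /x mulVf // gt_eqF // mulr_gt0.
have hlt : x * (e * delta) < k%:R * (e * delta) by rewrite ltr_pM2r // mulr_gt0.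
have := geo k u Cu; have := bern k.
have : 0 <= (1 - delta) ^+ k by apply: exprn_ge0; lra.
set y := (1 - delta) ^+ k; set K := k%:R.
move: hlt; rewrite hx; nra.
Qed.


Definition diagc (mu : S -> R) : S2 -> R := fun p => if p.1 == p.2 then mu p.1 else 0.
Definition prodc (mu nu : S -> R) : S2 -> R := fun p => mu p.1 * nu p.2.
Definition mix (I : finType) (A : pred I) (w : I -> S2 -> R) : S2 -> R :=
  fun p => (#|A|%:R)^-1 * \sum_(i in A) w i p.
Definition glue (nu : S -> R) (w1 w2 : S2 -> R) : S2 -> R :=
  fun p => \sum_b (if nu b == 0 then 0 else w1 (p.1, b) * w2 (b, p.2) / nu b).

Lemma coupling_intro (mu nu : S -> R) (w : S2 -> R) :
  (forall p, 0 <= w p) -> (forall s, \sum_t w (s, t) = mu s) ->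
  (forall t, \sum_s w (s, t) = nu t) -> \sum_s mu s = 1 -> coupling mu nu w.
Proof.
move=> h0 hr hc h1; split; split => //.
rewrite -h1; under [RHS]eq_bigr do rewrite -hr.
by rewrite pair_bigA; apply: eq_bigr => -[].
Qed.

Lemma coupling_ge0 (mu nu : S -> R) (w : S2 -> R) : coupling mu nu w -> forall p, 0 <= w p.
Proof. by case=> -[]. Qed.

Lemma coupling_bndl (mu nu : S -> R) (w : S2 -> R) : coupling mu nu w -> forall a b, w (a, b) <= mu a.
Proof.
move=> hw a b; have [_ [hr _]] := hw; rewrite -hr (bigD1 b) //= lerDl.
by apply: sumr_ge0 => c _; apply: (coupling_ge0 hw).
Qed.

Lemma coupling_bndr (mu nu : S -> R) (w : S2 -> R) : coupling mu nu w -> forall a b, w (a, b) <= nu b.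
Proof.
move=> hw a b; have [_ [_ hc]] := hw; rewrite -hc (bigD1 a) //= lerDl.
by apply: sumr_ge0 => c _; apply: (coupling_ge0 hw).
Qed.

Lemma diagc_coupling (mu : S -> R) : is_distr mu -> coupling mu mu (diagc mu).
Proof.
move=> [h0 h1]; apply: coupling_intro => //.
- by move=> p; rewrite /diagc; case: ifP.
- move=> s; rewrite (bigD1 s) //= /diagc /= eqxx big1 ?addr0 // => t.
  by rewrite eq_sym => /negbTE ->.
- move=> t; rewrite (bigD1 t) //= /diagc /= eqxx big1 ?addr0 // => s.
  by move=> /negbTE ->.
Qed.

Lemma prodc_coupling (mu nu : S -> R) : is_distr mu -> is_distr nu -> coupling mu nu (prodc mu nu).
Proof.
move=> [m0 m1] [n0 n1]; apply: coupling_intro => //.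
- by move=> p; apply: mulr_ge0.
- by move=> s; rewrite /prodc /= -mulr_sumr n1 mulr1.
- by move=> t; rewrite /prodc /= -mulr_suml m1 mul1r.
Qed.

Lemma mix_coupling (I : finType) (A : pred I) (w : I -> S2 -> R) (mu nu : S -> R) :
  (0 < #|A|)%N -> (forall i, A i -> coupling mu nu (w i)) -> is_distr mu ->
  coupling mu nu (mix A w).
Proof.
move=> hA hw [_ m1].
have hn : (#|A|%:R : R) != 0 by rewrite pnatr_eq0 -lt0n.
have key : forall (F : I -> R) (x : R), (forall i, A i -> F i = x) ->
   (#|A|%:R)^-1 * \sum_(i in A) F i = x.
  move=> F x hF; rewrite (eq_bigr (fun _ => x)) // sumr_const.
  by rewrite -[x *+ _]mulr_natr mulrCA mulVf ?mulr1.
apply: coupling_intro => //.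
- move=> p; apply: mulr_ge0; first by rewrite invr_ge0 ler0n.
  by apply: sumr_ge0 => i hi; apply: (coupling_ge0 (hw i hi)).
- move=> s; rewrite /mix -mulr_sumr exchange_big /=; apply: key => i hi.
  by have [_ [hr _]] := hw i hi.
- move=> t; rewrite /mix -mulr_sumr exchange_big /=; apply: key => i hi.
  by have [_ [_ hc]] := hw i hi.
Qed.

Lemma mix_pos (I : finType) (A : pred I) (w : I -> S2 -> R) p :
  0 < mix A w p -> exists i, A i /\ 0 < w i p.
Proof.
move=> h; apply: NNPP => hn.
have : \sum_(i in A) w i p <= \sum_(i in A) (0 : R).
  apply: ler_sum => i hi.
  by rewrite leNgt; apply/negP => hlt; apply: hn; exists i.
rewrite big1_eq.
move: h; rewrite /mix; set X := \sum_(i in A) _ => h hX.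
have : 0 <= (#|A|%:R : R)^-1 by rewrite invr_ge0 ler0n.
move=> hi; have := mulr_ge0_le0 hi hX; lra.
Qed.

Lemma mix_pos2 (I : finType) (A : pred I) (w : I -> S2 -> R) p i :
  A i -> 0 < w i p -> (forall j, A j -> 0 <= w j p) -> 0 < mix A w p.
Proof.
move=> hi hp h0; have hA : (0 < #|A|)%N by apply/card_gt0P; exists i.
apply: mulr_gt0; first by rewrite invr_gt0 ltr0n.
rewrite (bigD1 i) //=; apply: ltr_pwDl => //.
by apply: sumr_ge0 => j /andP[hj _]; apply: h0.
Qed.

Lemma glue_coupling (mu nu rho : S -> R) (w1 w2 : S2 -> R) :
  coupling mu nu w1 -> coupling nu rho w2 -> is_distr mu -> coupling mu rho (glue nu w1 w2).
Proof.
move=> h1 h2 [_ m1].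
have nu0 : forall b, 0 <= nu b.
  by move=> b; apply: le_trans (coupling_bndr h1 b b); apply: (coupling_ge0 h1).
apply: coupling_intro => //.
- move=> p; apply: sumr_ge0 => b _; case: ifP => // _.
  apply: mulr_ge0; last by rewrite invr_ge0.
  by apply: mulr_ge0; [apply: (coupling_ge0 h1) | apply: (coupling_ge0 h2)].
- move=> a; rewrite /glue /= exchange_big /=.
  have [_ [hr _]] := h1; rewrite -hr; apply: eq_bigr => b _.
  case: (eqVneq (nu b) 0) => hb.
    rewrite big1 //.
    apply/esym/le_anti; rewrite (coupling_ge0 h1) andbT.
    by rewrite -hb; apply: (coupling_bndr h1).
  rewrite -mulr_suml -mulr_sumr; have [_ [hr2 _]] := h2; rewrite hr2.
  by rewrite mulfK.
- move=> c; rewrite /glue /= exchange_big /=.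
  have [_ [_ hc]] := h2; rewrite -hc; apply: eq_bigr => b _.
  case: (eqVneq (nu b) 0) => hb.
    rewrite big1 //.
    apply/esym/le_anti; rewrite (coupling_ge0 h2) andbT.
    by rewrite -hb; apply: (coupling_bndl h2).
  rewrite -mulr_suml -mulr_suml; have [_ [_ hc1]] := h1; rewrite hc1.
  by rewrite mulrAC divff ?mul1r.
Qed.

Lemma glue_pos (mu nu rho : S -> R) (w1 w2 : S2 -> R) p :
  coupling mu nu w1 -> coupling nu rho w2 ->
  0 < glue nu w1 w2 p -> exists b, 0 < w1 (p.1, b) /\ 0 < w2 (b, p.2).
Proof.
move=> h1 h2 h; apply: NNPP => hn; move: h; rewrite /glue big1 ?ltxx // => b _.
case: ifP => // _.
have := coupling_ge0 h1 (p.1, b); rewrite le_eqVlt => /orP[/eqP <-|g1].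
  by rewrite !mul0r.
have := coupling_ge0 h2 (b, p.2); rewrite le_eqVlt => /orP[/eqP <-|g2].
  by rewrite mulr0 mul0r.
by exfalso; apply: hn; exists b.
Qed.

Lemma glue_pos2 (mu nu rho : S -> R) (w1 w2 : S2 -> R) a b c :
  coupling mu nu w1 -> coupling nu rho w2 ->
  0 < w1 (a, b) -> 0 < w2 (b, c) -> 0 < glue nu w1 w2 (a, c).
Proof.
move=> h1 h2 g1 g2.
have nu0 : forall b, 0 <= nu b.
  by move=> b'; apply: le_trans (coupling_bndr h1 b' b'); apply: (coupling_ge0 h1).
have nb : 0 < nu b by apply: lt_le_trans g1 (coupling_bndr h1 a b).
rewrite /glue (bigD1 b) //= (negbTE (lt0r_neq0 nb)); apply: ltr_pwDl.
  by apply: divr_gt0 => //; apply: mulr_gt0.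
apply: sumr_ge0 => b' _; case: ifP => // _.
apply: mulr_ge0; last by rewrite invr_ge0.
by apply: mulr_ge0; [apply: (coupling_ge0 h1) | apply: (coupling_ge0 h2)].
Qed.


Notation Rb := (robust_bisimilar tau ell).

Definition P0 : S2 -> S2 -> R :=
  fun u => if ell u.1 == ell u.2 then prodc (tau u.1) (tau u.2) else @dirac R _ u.

Lemma P0_pol : policy tau ell P0.
Proof.
move=> s t; rewrite /P0 /=; split => h.
  by case: eqP.
by rewrite h eqxx; apply: prodc_coupling.
Qed.

Definition mkpol (c : S2 -> S2 -> R) : S2 -> S2 -> R :=
  fun u => if diagS u then diagc (tau u.1) else if ell u.1 == ell u.2 then c u else @dirac R _ u.

Lemma mkpol_pol c : (forall u, ~~ diagS u -> ell u.1 = ell u.2 ->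
  coupling (tau u.1) (tau u.2) (c u)) -> policy tau ell (mkpol c).
Proof.
move=> hc s t; rewrite /mkpol /=; split => h.
  have hd : diagS (s, t) = false.
    by apply/negbTE; apply/negP => /eqP /= e; apply: h; rewrite e.
  by rewrite hd; case: eqP.
case: ifP => hd.
  by rewrite /diagS /= in hd; move/eqP: hd => <-; apply: diagc_coupling.
by rewrite h eqxx; apply: (hc (s, t)) => //; rewrite hd.
Qed.

Lemma mkpol_diag c u : diagS u -> mkpol c u = diagc (tau u.1).
Proof. by rewrite /mkpol => ->. Qed.

Lemma mkpol_nd c a b : ~~ diagS (a, b) -> ell a = ell b -> mkpol c (a, b) = c (a, b).
Proof. by rewrite /mkpol => /negbTE -> /= ->; rewrite eqxx. Qed.

Lemma diagc_pos (mu : S -> R) v : 0 < diagc mu v -> v.1 = v.2.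
Proof. by rewrite /diagc; case: eqP => // _; rewrite ltxx. Qed.

Lemma Rb_refl s : Rb s s.
Proof.
exists P0; split; first exact: P0_pol.
apply/(reachesE P0_pol) => e he; exists 0%N; by rewrite /= /diagS /= eqxx.
Qed.

Lemma Rb_labels s t : Rb s t -> ell s = ell t.
Proof. by move=> [P [hP hr]]; apply: (reaches_labels hP). Qed.

Definition swp (u : S2) : S2 := (u.2, u.1).

Lemma swp_inj : injective swp.
Proof. by move=> [a b] [c d] [-> ->]. Qed.

Lemma sum_swap (F : S2 -> R) : \sum_v F (swp v) = \sum_v F v.
Proof. by rewrite [RHS](reindex_inj swp_inj). Qed.

Definition Psw (P : S2 -> S2 -> R) : S2 -> S2 -> R := fun u v => P (swp u) (swp v).

Lemma Psw_pol P : policy tau ell P -> policy tau ell (Psw P).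
Proof.
move=> hP s t; have [h1 h2] := hP t s; split => h.
  rewrite /Psw /= h1; last by move=> e; apply: h.
  apply: functional_extensionality => -[a b].
  by rewrite /dirac /swp /= !xpair_eqE andbC.
have [[h0 hs] [hr hc]] := h2 (esym h).
split; first split.
- by move=> v; apply: h0.
- by rewrite /Psw (sum_swap (fun v => P (t, s) v)).
- split => a; rewrite /Psw /=.
    by rewrite -hc.
  by rewrite -hr.
Qed.

Lemma G_swap P n u : G (Psw P) n one u = G P n one (swp u).
Proof.
elim: n u => [|n IH] u /=; have -> : diagS (swp u) = diagS u by rewrite /diagS eq_sym.
  by [].
case: ifP => // _; rewrite -(sum_swap (fun v => P (swp u) v * G P n one v)).
by apply: eq_bigr => v _; rewrite IH.
Qed.

Lemma Rb_sym s t : Rb s t -> Rb t s.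
Proof.
move=> [P [hP hr]]; exists (Psw P); split; first exact: Psw_pol.
apply/(reachesE (Psw_pol hP)) => e he.
have [n hn] := (proj1 (reachesE hP _) hr) e he; exists n.
by rewrite G_swap.
Qed.


Definition Pw (w : S2) : S2 -> S2 -> R :=
  epsilon (inhabits P0) (fun P => policy tau ell P /\ reaches_diag_as P w).

Lemma Pw_spec w : Rb w.1 w.2 -> policy tau ell (Pw w) /\ reaches_diag_as (Pw w) w.
Proof.
case: w => a b [P hP].
exact: (epsilon_spec (inhabits P0) (fun P => policy tau ell P /\ reaches_diag_as P (a, b)) (ex_intro _ P hP)).
Qed.

Lemma reaches_Rb P : policy tau ell P -> forall v, reaches_diag_as P v -> Rb v.1 v.2.
Proof. by move=> hP [a b] hr; exists P. Qed.

Definition Wset (u : S2) : pred S2 :=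
  fun w => asb (policy tau ell (Pw w) /\ reaches_diag_as (Pw w) u).

Definition Q : S2 -> S2 -> R := mkpol (fun u =>
  if (0 < #|Wset u|)%N then mix (Wset u) (fun w => Pw w u)
  else prodc (tau u.1) (tau u.2)).

Lemma Q_pol : policy tau ell Q.
Proof.
apply: mkpol_pol => -[a b] hd /= hl; case: ifP => hc; last first.
  by apply: prodc_coupling.
apply: mix_coupling => // w /asbE [hP _].
exact: (proj2 (hP a b) hl).
Qed.

Lemma Q_coup x y : Rb x y -> coupling (tau x) (tau y) (Q (x, y)).
Proof. by move=> h; apply: (proj2 (Q_pol x y)); apply: Rb_labels. Qed.

Lemma Q_mix a b : ~~ diagS (a, b) -> ell a = ell b -> Rb a b ->
  Q (a, b) = mix (Wset (a, b)) (fun w => Pw w (a, b)).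
Proof.
move=> hd hl hR; rewrite /Q mkpol_nd //.
have [hP hr] := Pw_spec (w := (a, b)) hR.
have -> : (0 < #|Wset (a, b)|)%N.
  by apply/card_gt0P; exists (a, b); rewrite /in_mem /=; apply: asbT.
by [].
Qed.

Lemma Q_succ x y v : Rb x y -> 0 < Q (x, y) v -> Rb v.1 v.2.
Proof.
move=> hR; case hd: (diagS (x, y)).
  by rewrite /Q mkpol_diag // => /diagc_pos ->; apply: Rb_refl.
rewrite Q_mix ?hd ?(Rb_labels hR) // => /mix_pos [w [/asbE [hP hr] hp]].
apply: (reaches_Rb hP); apply: (propagate hP hr) => //; by rewrite hd.
Qed.

Lemma Q2 x y : Rb x y -> exists n, G Q n one (x, y) < 1.
Proof.
move=> hR; have [hP hr] := Pw_spec (w := (x, y)) hR.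
have [n hn] := (proj1 (reachesE hP _) hr) 1 ltr01.
exists n; apply: (transfer hP Q_pol (A := reaches_diag_as (Pw (x, y)))) hr hn.
move=> [a b] w Av hd hp; split; first exact: (propagate hP Av hd hp).
have hRv := reaches_Rb hP Av.
rewrite Q_mix //; last exact: (Rb_labels hRv).
apply: (mix_pos2 (i := (x, y))) => //; first by apply: asbT.
by move=> j /asbE [hPj _]; apply: pol_ge0.
Qed.


Definition Yset (u : S2) : pred S := fun y => asb (Rb u.1 y /\ Rb y u.2).

Definition Q' : S2 -> S2 -> R := mkpol (fun u =>
  if (0 < #|Yset u|)%N then mix (Yset u) (fun y => glue (tau y) (Q (u.1, y)) (Q (y, u.2)))
  else prodc (tau u.1) (tau u.2)).

Lemma Q'_pol : policy tau ell Q'.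
Proof.
apply: mkpol_pol => -[a b] hd /= hl; case: ifP => hc; last first.
  by apply: prodc_coupling.
apply: mix_coupling => // y /asbE [h1 h2].
exact: (glue_coupling (Q_coup h1) (Q_coup h2) (tau_distr a)).
Qed.

Lemma Q'_mix x y z : Rb x y -> Rb y z -> ~~ diagS (x, z) ->
  Q' (x, z) = mix (Yset (x, z)) (fun y => glue (tau y) (Q (x, y)) (Q (y, z))).
Proof.
move=> h1 h2 hd; rewrite /Q' mkpol_nd //; last by rewrite (Rb_labels h1) (Rb_labels h2).
have -> : (0 < #|Yset (x, z)|)%N.
  by apply/card_gt0P; exists y; rewrite /in_mem /=; apply: asbT.
by [].
Qed.

Lemma Q'_pos2 x y z a b c : Rb x y -> Rb y z -> ~~ diagS (x, z) ->
  0 < Q (x, y) (a, b) -> 0 < Q (y, z) (b, c) -> 0 < Q' (x, z) (a, c).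
Proof.
move=> h1 h2 hd p1 p2; rewrite (Q'_mix h1 h2 hd).
apply: (mix_pos2 (i := y)); first by apply: asbT.
  exact: (glue_pos2 (Q_coup h1) (Q_coup h2) p1 p2).
move=> j /asbE [g1 g2].
exact: (coupling_ge0 (glue_coupling (Q_coup g1) (Q_coup g2) (tau_distr x))).
Qed.

Lemma Q'_succ x y z v : Rb x y -> Rb y z -> ~~ diagS (x, z) ->
  0 < Q' (x, z) v -> exists b, Rb v.1 b /\ Rb b v.2.
Proof.
move=> h1 h2 hd; rewrite (Q'_mix h1 h2 hd) => /mix_pos [y' [/asbE [g1 g2] hp]].
have [b [p1 p2]] := glue_pos (Q_coup g1) (Q_coup g2) hp.
exists b; split; [exact: (Q_succ g1 p1) | exact: (Q_succ g2 p2)].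
Qed.

Lemma sum_pos_ex (F : S -> R) : 0 < \sum_c F c -> exists c, 0 < F c.
Proof.
move=> h; apply: NNPP => hn.
have : \sum_c F c <= \sum_(c : S) (0 : R).
  apply: ler_sum => c _; rewrite leNgt; apply/negP => hc; apply: hn; by exists c.
rewrite big1_eq; lra.
Qed.

Lemma Tlem n : forall x y z, Rb x y -> Rb y z -> G Q n one (x, y) < 1 ->
  exists m, G Q' m one (x, z) < 1.
Proof.
elim: n => [|n IH] x y z h1 h2 hn;
  (case hxz: (diagS (x, z)); first by exists 0%N; rewrite /= hxz ltr01);
  case hxy: (diagS (x, y)).
- move: hxy; rewrite /diagS /= => /eqP ?; subst y.
  have [k hk] := Q2 h2; exists k.
  apply: (transfer Q_pol Q'_pol (A := fun v => Rb v.1 v.2)) hk => //.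
  move=> [a b] [w1 w2] hab hd hp; split; first exact: (Q_succ hab hp).
  apply: (Q'_pos2 (Rb_refl a) hab hd _ hp).
  rewrite /Q mkpol_diag /diagS ?eqxx // /diagc /= eqxx.
  exact: lt_le_trans hp (coupling_bndl (Q_coup hab) _ _).
- by rewrite /= hxy /one ltxx in hn.
- move: hxy; rewrite /diagS /= => /eqP ?; subst y.
  have [k hk] := Q2 h2; exists k.
  apply: (transfer Q_pol Q'_pol (A := fun v => Rb v.1 v.2)) hk => //.
  move=> [a b] [w1 w2] hab hd hp; split; first exact: (Q_succ hab hp).
  apply: (Q'_pos2 (Rb_refl a) hab hd _ hp).
  rewrite /Q mkpol_diag /diagS ?eqxx // /diagc /= eqxx.
  exact: lt_le_trans hp (coupling_bndl (Q_coup hab) _ _).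
- move: hn; rewrite (posr_step Q_pol) ?hxy // => -[[a b] [hp hG]].
  have : 0 < \sum_c Q (y, z) (b, c).
    have [_ [hr _]] := Q_coup h2; rewrite hr.
    exact: lt_le_trans hp (coupling_bndr (Q_coup h1) _ _).
  move=> /sum_pos_ex [c hc].
  have [m hm] := IH a b c (Q_succ h1 hp) (Q_succ h2 hc) hG.
  exists m.+1; rewrite (posr_step Q'_pol) ?hxz //.
  exists (a, c); split => //; apply: (Q'_pos2 h1 h2) hp hc; by rewrite hxz.
Qed.

Lemma Rb_trans x y z : Rb x y -> Rb y z -> Rb x z.
Proof.
move=> h1 h2.
pose C := fun u : S2 => exists y, Rb u.1 y /\ Rb y u.2.
have hr : reaches_diag_as Q' (x, z).
  apply: (@AS Q' Q'_pol C).
  - move=> [a b] v [y' [g1 g2]] hd hp; exact: (Q'_succ g1 g2 hd hp).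
  - move=> [a b] [y' [g1 g2]]; have [n hn] := Q2 g1; exact: (Tlem g1 g2 hn).
  - by exists y.
exact: (reaches_Rb Q'_pol hr).
Qed.


Lemma Q_succ' u v : Rb u.1 u.2 -> 0 < Q u v -> Rb v.1 v.2.
Proof. by case: u => a b; apply: Q_succ. Qed.

Lemma path_ex n : forall u, Rb u.1 u.2 -> G Q n one u < 1 ->
  exists m (p : nat -> S2), p 0%N = u /\ diagS (p m) /\
    (forall i, (i < m)%N -> 0 < Q (p i) (p i.+1)) /\
    (forall i, (i <= m)%N -> Rb (p i).1 (p i).2).
Proof.
elim: n => [|n IH] u hu hn; case hd: (diagS u);
  try (exists 0%N, (fun _ => u); split => //; split => //; split => //; by move=> i; rewrite leqn0 => /eqP ->).
- by rewrite /= hd /one ltxx in hn.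
- move: hn; rewrite (posr_step Q_pol) ?hd // => -[v [hp hG]].
  have [m [p [h0 [hdm [he hr]]]]] := IH v (Q_succ' hu hp) hG.
  exists m.+1, (fun i => if i is k.+1 then p k else u); split => //; split => //; split.
    by case=> [|k] hk /=; [rewrite h0 | apply: he].
  by case=> [|k] hk /=; [ | apply: hr].
Qed.

Lemma main_lemma : robust_bisimulation tau ell Rb.
Proof.
split.
  split.
    split; first exact: Rb_refl.
    by split; [exact: Rb_sym | exact: Rb_trans].
  move=> s t h; split; first exact: Rb_labels.
  exists (Q (s, t)); split; first exact: Q_coup.
  by move=> u v hp; apply: (Q_succ h hp).
move=> s t h; exists Q; split; first exact: Q_pol.
have [n hn] := Q2 h.
have [m [p [h0 [hdm [he hr]]]]] := path_ex (u := (s, t)) h hn.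
exists m, p; split => //; split => //; split => // i hi; split; first exact: hr.
move=> v hv; exact: (Q_succ' (hr i hi) hv).
Qed.

End Main.

Theorem proposition3 (R : realType) (S : finType) (L : finType)
  (tau : S -> S -> R) (ell : S -> L)
  (tau_distr : forall s, is_distr (tau s))
  (two_labels : exists s t, ell s <> ell t) :
  robust_bisimulation tau ell (robust_bisimilar tau ell).
Proof. exact: (@main_lemma R S L tau ell tau_distr). Qed.
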